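(* Let $G$ be a unimodular amenable locally compact group with Haar measure $m$, let $(A_i)_{i\in\mathbb I}$ be a strong Følner net in $G$, and let $\nu$ be an upper translation bounded measure on $G$. Then for all $K,L\in\mathcal K$ the following limits exist and \[ \sup_{K,L\in \mathcal K}\lim_{i\in \mathbb I} \sup_{s\in G} \frac{\nu(L \delta^K A_is)}{m(A_i)} = \sup_{K,L\in \mathcal K}\lim_{i\in \mathbb I} \sup_{s\in G}\frac{\nu(L \partial_K A_is)}{m(A_i)} = \sup_{K,L\in \mathcal K}\lim_{i\in \mathbb I} \sup_{s\in G}\frac{\nu(L \partial^K A_is)}{m(A_i)} = 0 . \]
   Context: A measure is a positive Borel measure; $\nu$ is upper translation bounded if $\sup_{x\in G}\nu(Bx)<\infty$ for some compact symmetric unit neighborhood $B$. $\mathcal K$: nonempty compact subsets of $G$; $\mathcal K_p$: those of positive Haar measure. Nets are indexed by a directed partially ordered set $(\mathbb I,\prec)$. For $K,A\subseteq G$ with $A^c=G\setminus A$: $\delta^KA=KA\,\triangle\,A$; $\partial^KA=(KA\cap \overline{A^c})\cup (K^{-1} \overline{A^c}\cap A)$; $\partial_K A=K^{-1}A\cap K^{-1}A^c$. A strong Følner net is a net $(A_i)$ in $\mathcal K_p$ with $\lim_i m(\partial_KA_i)/m(A_i)=0$ for every $K\in\mathcal K$. $G$ is amenable if it admits a left-invariant mean on $L^\infty(G)$. *)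

(* Defs.v *)
From HB Require Import structures.
From mathcomp Require Import all_boot all_order all_algebra.
From mathcomp Require Import all_classical all_reals all_analysis.

Set Implicit Arguments.
Unset Strict Implicit.
Unset Printing Implicit Defensive.

Import Order.TTheory GRing.Theory Num.Theory.
Import numFieldNormedType.Exports.
Local Open Scope classical_set_scope.
Local Open Scope ring_scope.

Definition lc_group (G : topologicalType) (mul : G -> G -> G) (inv : G -> G)
    (e : G) : Prop :=
  [/\ (forall x y z, mul x (mul y z) = mul (mul x y) z),
      (forall x, mul e x = x /\ mul x e = x),
      (forall x, mul (inv x) x = e /\ mul x (inv x) = e),
      (continuous (fun p : G * G => mul (fst p) (snd p)) /\ continuous inv) &
      (hausdorff_space G /\
      locally_compact [set: G])].

Section Sets.
Context {G : Type} (mul : G -> G -> G) (inv : G -> G).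

Definition setmul (A B : set G) : set G :=
  [set z | exists a, exists b, [/\ A a, B b & z = mul a b]].
Definition lmul (s : G) (A : set G) : set G := [set mul s a | a in A].
Definition rmul (A : set G) (s : G) : set G := [set mul a s | a in A].
Definition setinv (A : set G) : set G := [set inv a | a in A].
End Sets.

Definition ncompact {G : topologicalType} (K : set G) := compact K /\ K !=set0.

Definition borel (G : topologicalType) : set (set G) := <<s [set: G], open >>.

(* positive Borel measure: a set function, meaningful on Borel sets *)
Definition borel_measure {R : realType} {G : topologicalType}
    (mu : set G -> \bar R) : Prop :=
  [/\ mu set0 = 0%E,
      (forall B, @borel G B -> (0 <= mu B)%E) &
      (forall F : nat -> set G, (forall n, @borel G (F n)) ->
         trivIset setT F ->
         (fun n => \sum_(0 <= k < n) mu (F k))%E @ \oo --> mu (\bigcup_k F k))].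

(* outer measure induced by a Borel measure (used to evaluate mu on sets
   not known a priori to be Borel; coincides with mu on Borel sets) *)
Definition outer {R : realType} {G : topologicalType} (mu : set G -> \bar R)
    (X : set G) : \bar R :=
  ereal_inf [set mu B | B in [set B | @borel G B /\ X `<=` B]].

Definition haar_measure {R : realType} {G : topologicalType}
    (mul : G -> G -> G) (m : set G -> \bar R) : Prop :=
  [/\ borel_measure m /\ (forall g B, @borel G B -> m (lmul mul g B) = m B),
      (forall C, compact C -> (m C < +oo)%E),
      (forall U, open U -> U !=set0 -> (0 < m U)%E),
      (forall B, @borel G B ->
         m B = ereal_inf [set m U | U in [set U | open U /\ B `<=` U]]) &
      (forall U, open U ->
         m U = ereal_sup [set m C | C in [set C | compact C /\ C `<=` U]])].

Definition unimodular {R : realType} {G : topologicalType}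
    (mul : G -> G -> G) (m : set G -> \bar R) : Prop :=
  forall g B, @borel G B -> m (rmul mul B g) = m B.

Definition borel_fun {R : realType} {G : topologicalType} (f : G -> R) :=
  forall B : set R, measurable B -> @borel G (f @^-1` B).

Definition m_null {R : realType} {G : topologicalType} (m : set G -> \bar R)
    (N : set G) := @borel G N /\ m N = 0%E.

Definition Linf {R : realType} {G : topologicalType} (m : set G -> \bar R)
    (f : G -> R) : Prop :=
  borel_fun f /\
  exists C : R, exists N, m_null m N /\ forall x, ~ N x -> `|f x| <= C.

Definition left_invariant_mean {R : realType} {G : topologicalType}
    (mul : G -> G -> G) (m : set G -> \bar R) (M : (G -> R) -> R) : Prop :=
  [/\ (forall f g, Linf m f -> Linf m g -> M (f \+ g) = M f + M g),
      (forall (c : R) f, Linf m f -> M (fun x => c * f x) = c * M f),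
      (forall f, Linf m f ->
         (exists N, m_null m N /\ forall x, ~ N x -> 0 <= f x) -> 0 <= M f),
      M (fun _ => 1) = 1 &
      (forall g f, Linf m f -> M (fun x => f (mul g x)) = M f)].

Definition amenable {R : realType} {G : topologicalType}
    (mul : G -> G -> G) (m : set G -> \bar R) : Prop :=
  exists M : (G -> R) -> R, left_invariant_mean mul m M.

Definition upper_translation_bounded {R : realType} {G : topologicalType}
    (mul : G -> G -> G) (inv : G -> G) (e : G) (nu : set G -> \bar R) : Prop :=
  exists B : set G, [/\ compact B, setinv inv B = B, nbhs e B &
    (ereal_sup [set nu (rmul mul B x) | x in [set: G]] < +oo)%E].

Definition directed_poset {I : Type} (le : I -> I -> Prop) : Prop :=
  [/\ (forall i, le i i),
      (forall i j k, le i j -> le j k -> le i k),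
      (forall i j, le i j -> le j i -> i = j) &
      (forall i j, exists k, le i k /\ le j k)].

Definition net_cvg {I : Type} (le : I -> I -> Prop) {T : topologicalType}
    (x : I -> T) (l : T) : Prop :=
  forall U, nbhs l U -> exists i0, forall i, le i0 i -> U (x i).

Section Boundaries.
Context {G : topologicalType} (mul : G -> G -> G) (inv : G -> G).

Definition delta_up (K A : set G) : set G :=
  (setmul mul K A `\` A) `|` (A `\` setmul mul K A).

Definition bd_up (K A : set G) : set G :=
  (setmul mul K A `&` closure (~` A)) `|`
  (setmul mul (setinv inv K) (closure (~` A)) `&` A).

Definition bd_low (K A : set G) : set G :=
  setmul mul (setinv inv K) A `&` setmul mul (setinv inv K) (~` A).
End Boundaries.

Definition strong_folner {R : realType} {G : topologicalType} {I : Type}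
    (mul : G -> G -> G) (inv : G -> G) (m : set G -> \bar R)
    (le : I -> I -> Prop) (A : I -> set G) : Prop :=
  (forall i, ncompact (A i) /\ (0 < m (A i))%E) /\
  (forall K, ncompact K ->
     net_cvg le (fun i => fine (m (bd_low mul inv K (A i))) / fine (m (A i)))
       (0 : R)).

Definition sup_ratio {R : realType} {G : topologicalType}
    (mul : G -> G -> G) (nu m : set G -> \bar R) (L D A : set G) : \bar R :=
  ereal_sup [set (outer nu (rmul mul (setmul mul L D) s)
                   * ((fine (m A))^-1)%:E)%E | s in [set: G]].

Definition limits_exist_sup0 {R : realType} {G : topologicalType} {I : Type}
    (mul : G -> G -> G) (nu m : set G -> \bar R) (le : I -> I -> Prop)
    (A : I -> set G) (bd : set G -> set G -> set G) : Prop :=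
  (forall K L, ncompact K -> ncompact L ->
     exists l : \bar R,
       net_cvg le (fun i => sup_ratio mul nu m L (bd K (A i)) (A i)) l) /\
  ereal_sup [set l : \bar R | exists K, exists L,
     [/\ ncompact K, ncompact L &
       net_cvg le (fun i => sup_ratio mul nu m L (bd K (A i)) (A i)) l]]
  = 0%E.

(* Main.v *)
Require Import Defs.
From HB Require Import structures.
From mathcomp Require Import all_boot all_order all_algebra.
From mathcomp Require Import all_classical all_reals all_analysis.
Import Order.TTheory GRing.Theory Num.Theory.
Local Open Scope classical_set_scope.
Local Open Scope ring_scope.
Set Implicit Arguments.
Unset Strict Implicit.
Unset Printing Implicit Defensive.

Section Grp.
Variables (G : topologicalType) (mul : G -> G -> G) (inv : G -> G) (e : G).
Hypothesis HG : lc_group mul inv e.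

Lemma gA x y z : mul x (mul y z) = mul (mul x y) z.
Proof. by case: HG. Qed.
Lemma g1l x : mul e x = x.
Proof. by case: HG => _ H _ _ _; case: (H x). Qed.
Lemma g1r x : mul x e = x.
Proof. by case: HG => _ H _ _ _; case: (H x). Qed.
Lemma gVl x : mul (inv x) x = e.
Proof. by case: HG => _ _ H _ _; case: (H x). Qed.
Lemma gVr x : mul x (inv x) = e.
Proof. by case: HG => _ _ H _ _; case: (H x). Qed.
Lemma gKl x y : mul (inv x) (mul x y) = y.
Proof. by rewrite gA gVl g1l. Qed.
Lemma gKVl x y : mul x (mul (inv x) y) = y.
Proof. by rewrite gA gVr g1l. Qed.
Lemma gKr x y : mul (mul y x) (inv x) = y.
Proof. by rewrite -gA gVr g1r. Qed.
Lemma gKVr x y : mul (mul y (inv x)) x = y.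
Proof. by rewrite -gA gVl g1r. Qed.
Lemma ginvK x : inv (inv x) = x.
Proof. by have := gKl (inv x) x; rewrite gVl g1r. Qed.
Lemma ginv_e : inv e = e.
Proof. by have := gVl e; rewrite g1r. Qed.

Lemma mul_cont : continuous (fun p : G * G => mul p.1 p.2).
Proof. by case: HG => _ _ _ []. Qed.
Lemma inv_cont : continuous inv.
Proof. by case: HG => _ _ _ []. Qed.
Lemma G_hausdorff : hausdorff_space G.
Proof. by case: HG => _ _ _ _ []. Qed.

Lemma rmul_cont s : continuous (fun x => mul x s).
Proof.
move=> x; apply: (@continuous2_cvg _ _ _ _ _ _ (fun y => y) (fun _ => s) mul).
- exact: (@mul_cont (x, s)).
- exact: cvg_id.
- exact: cvg_cst.
Qed.
Lemma lmul_cont s : continuous (fun x => mul s x).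
Proof.
move=> x; apply: (@continuous2_cvg _ _ _ _ _ _ (fun _ => s) (fun y => y) mul).
- exact: (@mul_cont (s, x)).
- exact: cvg_cst.
- exact: cvg_id.
Qed.

Lemma open_rmul U s : open U -> open (rmul mul U s).
Proof.
move=> oU.
have -> : rmul mul U s = (fun x => mul x (inv s)) @^-1` U.
  apply/seteqP; split => [y [u Uu <-]|y /= Uy].
  - by rewrite /= -gA gVr g1r.
  - by exists (mul y (inv s)) => //; rewrite -gA gVl g1r.
by apply: open_comp => // x _; exact: rmul_cont.
Qed.

Lemma open_setmul M U : open U -> open (setmul mul M U).
Proof.
move=> oU.
have -> : setmul mul M U = \bigcup_(k in M) ((fun x => mul (inv k) x) @^-1` U).
  apply/seteqP; split => [y [k [u [Mk Uu ->]]]|y [k Mk /= Uy]].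
  - by exists k => //=; rewrite gKl.
  - by exists k, (mul (inv k) y); split => //; rewrite gKVl.
apply: bigcup_open => k _; apply: open_comp => // x _; exact: lmul_cont.
Qed.

Lemma compact_setmul P Q : compact P -> compact Q -> compact (setmul mul P Q).
Proof.
move=> cP cQ.
have -> : setmul mul P Q = (fun p : G * G => mul p.1 p.2) @` (P `*` Q).
  apply/seteqP; split => [y [a [b [Pa Qb ->]]]|y [[a b] [/= Pa Qb] <-]].
  - by exists (a, b).
  - by exists a, b.
apply: continuous_compact; last exact: compact_setX.
exact: continuous_subspaceT (@mul_cont).
Qed.

Lemma compact_setinv K : compact K -> compact (setinv inv K).
Proof.
move=> cK; apply: continuous_compact => //; exact: continuous_subspaceT (@inv_cont).
Qed.

Lemma compact_rmul K s : compact K -> compact (rmul mul K s).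
Proof.
move=> cK; apply: continuous_compact => //; exact: continuous_subspaceT (@rmul_cont s).
Qed.

Lemma gsetinvK K : setinv inv (setinv inv K) = K.
Proof.
apply/seteqP; split => [y [_ [k Kk <-] <-]|y Ky]; first by rewrite ginvK.
by exists (inv y); [exists y | rewrite ginvK].
Qed.

End Grp.

Section Borel.
Variable G : topologicalType.

Lemma borel_sigma : sigma_algebra setT (@borel G).
Proof. exact: smallest_sigma_algebra. Qed.

Lemma borel0 : @borel G set0.
Proof. by case: borel_sigma. Qed.

Lemma borelC A : @borel G A -> borel (~` A).
Proof. by case: borel_sigma => _ H _ /H; rewrite setTD. Qed.

Lemma borel_open U : open U -> @borel G U.
Proof. by move=> oU; apply: sub_sigma_algebra. Qed.

Lemma borel_closed C : closed C -> @borel G C.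
Proof. by move=> cC; rewrite -(setCK C); apply: borelC; apply: borel_open; exact: closed_openC. Qed.

Lemma borelU A B : @borel G A -> borel B -> borel (A `|` B).
Proof.
move=> bA bB; case: borel_sigma => _ _ H; rewrite -bigcup2E; apply: H.
by case=> [|[|n]] //=; exact: borel0.
Qed.

Lemma borelI A B : @borel G A -> borel B -> borel (A `&` B).
Proof.
move=> bA bB; rewrite -(setCK (A `&` B)) setCI; apply: borelC; apply: borelU; exact: borelC.
Qed.

Lemma borelD A B : @borel G A -> borel B -> borel (A `\` B).
Proof. by move=> bA bB; apply: borelI => //; exact: borelC. Qed.

Lemma borel_compact C : hausdorff_space G -> compact C -> @borel G C.
Proof. by move=> hG cC; apply: borel_closed; exact: compact_closed. Qed.

End Borel.

Section Meas.
Variables (R : realType) (G : topologicalType) (mu : set G -> \bar R).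
Hypothesis Hmu : borel_measure mu.
Local Open Scope ereal_scope.

Lemma bm0 : mu set0 = 0. Proof. by case: Hmu. Qed.
Lemma bm_ge0 B : borel B -> 0 <= mu B. Proof. by case: Hmu => _ H _; exact: H. Qed.

Lemma bm_add A B : borel A -> borel B -> A `&` B = set0 -> mu (A `|` B) = mu A + mu B.
Proof.
move=> bA bB AB0; case: Hmu => m0 _ H.
have b2 : forall n, borel (bigcup2 A B n).
  by case=> [|[|n]] //=; exact: borel0.
have t2 : trivIset setT (bigcup2 A B).
  move=> i j _ _ [x [Fi Fj]].
  case: i j Fi Fj => [|[|i]] [|[|j]] //= Fi Fj.
  - by suff : (A `&` B) x by rewrite AB0.
  - by suff : (A `&` B) x by rewrite AB0.
have := H (bigcup2 A B) b2 t2.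
rewrite bigcup2E => h.
have h2 : (fun n => \sum_(0 <= k < n) mu (bigcup2 A B k)) @ \oo --> mu A + mu B.
  apply: cvg_near_cst; exists 2%N => // n /= n2.
  rewrite -(subnKC n2) big_nat_recl // big_nat_recl // /=.
  rewrite big1 ?adde0 // => k _ /=; exact: m0.
exact: (cvg_unique (@ereal_hausdorff R) h h2).
Qed.

Lemma bm_mono A B : borel A -> borel B -> A `<=` B -> mu A <= mu B.
Proof.
move=> bA bB AB.
rewrite -(setDUK AB) bm_add ?setDIK //; last exact: borelD.
by rewrite leeDl // bm_ge0 //; exact: borelD.
Qed.

Lemma bm_subadd A B : borel A -> borel B -> mu (A `|` B) <= mu A + mu B.
Proof.
move=> bA bB.
have -> : A `|` B = A `|` (B `\` A).
  by rewrite setUDr setDv setD0.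
rewrite bm_add ?setDIK //; last exact: borelD.
by apply: leeD2l; apply: bm_mono => //; exact: borelD.
Qed.

End Meas.

Definition ufold {T : Type} (f : T -> set T) (xs : seq T) : set T :=
  foldr (fun x S => f x `|` S) set0 xs.

Fixpoint sepP {T : Type} (f : T -> set T) (xs : seq T) : Prop :=
  match xs with
  | [::] => True
  | x :: t => f x `&` ufold f t = set0 /\ sepP f t
  end.

Fixpoint inP {T : Type} (x : T) (xs : seq T) : Prop :=
  match xs with [::] => False | y :: t => y = x \/ inP x t end.

Lemma ufoldP {T : Type} (f : T -> set T) xs y :
  ufold f xs y <-> exists x, inP x xs /\ f x y.
Proof.
elim: xs => [|x t IH] /=; first by split; [case | case=> ? []].
split.
- case=> [fy|/IH [z [iz fz]]]; first by exists x; split; [left|].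
  by exists z; split; [right|].
- case=> z [[<-|iz] fz]; first by left.
  by right; apply/IH; exists z.
Qed.

Section Fold.
Variables (R : realType) (G : topologicalType) (mu : set G -> \bar R).
Hypothesis Hmu : borel_measure mu.
Local Open Scope ereal_scope.

Lemma borel_ufold f xs : (forall x, borel (f x)) -> @borel G (ufold f xs).
Proof.
move=> bf; elim: xs => [|x t IH] /=; first exact: borel0.
exact: borelU.
Qed.

Lemma bm_ufold_le f xs (c : R) : (forall x, borel (f x)) ->
  (forall x, mu (f x) <= c%:E) -> mu (ufold f xs) <= ((size xs)%:R * c)%:E.
Proof.
move=> bf fc; elim: xs => [|x t IH] /=; first by rewrite bm0 // mul0r.
apply: le_trans (bm_subadd Hmu (bf x) (borel_ufold t bf)) _.
by rewrite -[(size t).+1]addn1 natrD mulrDl mul1r addrC EFinD leeD.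
Qed.

Lemma bm_ufold_eq f xs (c : R) : (forall x, borel (f x)) ->
  (forall x, mu (f x) = c%:E) -> sepP f xs -> mu (ufold f xs) = ((size xs)%:R * c)%:E.
Proof.
move=> bf fc; elim: xs => [|x t IH] /=; first by rewrite bm0 // mul0r.
case=> dis st.
rewrite bm_add // ?fc ?IH //; last exact: borel_ufold.
by rewrite -[(size t).+1]addn1 natrD mulrDl mul1r addrC EFinD.
Qed.
End Fold.

Definition DD {G : Type} (mul : G -> G -> G) (M A : set G) : set G :=
  setmul mul M A `&` setmul mul M (~` A).

Section Incl.
Variables (G : topologicalType) (mul : G -> G -> G) (inv : G -> G) (e : G).
Hypothesis HG : lc_group mul inv e.
Variables (B : set G).
Hypotheses (nB : nbhs e B).

Lemma closure_split A y : closure (~` A) y -> exists b z, [/\ B b, ~ A z & y = mul b z].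
Proof.
move=> cy.
have h : (fun z => mul y (inv z)) @ y --> mul y (inv y).
  exact: (cvg_comp _ _ (@inv_cont _ _ _ _ HG y) (@lmul_cont _ _ _ _ HG y (inv y))).
rewrite (gVr HG) in h.
have := cy _ (h _ nB); case=> z [nAz /= Bz].
by exists (mul y (inv z)), z; split => //; rewrite (gKVr HG).
Qed.

Variable K : set G.
Let M0 := setmul mul (K `|` [set e] `|` setinv inv K) B.
Let Be : B e := nbhs_singleton nB.

Let inM0 k b : (K `|` [set e] `|` setinv inv K) k -> B b -> M0 (mul k b).
Proof. by move=> hk hb; exists k, b. Qed.
Let inK k : K k -> M0 k.
Proof. by move=> Kk; rewrite -(g1r HG k); apply: inM0 => //; left; left. Qed.
Let inKi k : K k -> M0 (inv k).
Proof. by move=> Kk; rewrite -(g1r HG (inv k)); apply: inM0 => //; right; exists k. Qed.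
Let inE : M0 e.
Proof. by rewrite -(g1r HG e); apply: inM0 => //; left; right. Qed.
Let inB b : B b -> M0 b.
Proof. by move=> Bb; rewrite -(g1l HG b); apply: inM0 => //; left; right. Qed.

Lemma incl_delta A : K !=set0 -> delta_up mul K A `<=` DD mul M0 A.
Proof.
case=> k0 Kk0 x [[[k [a [Kk Aa ->]]] nA]|[Ax nKA]]; split.
- by exists k, a; split => //; exact: inK.
- by exists e, (mul k a); split => //; rewrite (g1l HG).
- by exists e, x; split => //; rewrite (g1l HG).
- exists k0, (mul (inv k0) x); split => //; [exact: inK | | by rewrite (gKVl HG)].
  by move=> hA; apply: nKA; exists k0, (mul (inv k0) x); split => //; rewrite (gKVl HG).
Qed.

Lemma incl_low A : bd_low mul inv K A `<=` DD mul M0 A.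
Proof.
move=> x [[_ [a [[k Kk <-] Aa ex]]] [_ [b [[k' Kk' <-] Ab ex']]]]; split.
- by exists (inv k), a; split => //; exact: inKi.
- by exists (inv k'), b; split => //; exact: inKi.
Qed.

Lemma incl_up A : bd_up mul inv K A `<=` DD mul M0 A.
Proof.
move=> x [[[k [a [Kk Aa ex]]] /closure_split [b [z [Bb nAz ex']]]]|].
- split; first by exists k, a; split => //; exact: inK.
  by exists b, z; split => //; exact: inB.
- move=> [[_ [y [[k Kk <-] /closure_split [b [z [Bb nAz ey]]] ex]]] Ax]; split.
  + by exists e, x; split => //; rewrite (g1l HG).
  + exists (mul (inv k) b), z; split => //; last by rewrite ex ey (gA HG).
    by apply: inM0 => //; right; exists k.
Qed.

End Incl.

Lemma net_squeeze (R : realType) (I : Type) (le : I -> I -> Prop) (r : I -> R)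
  (f : I -> \bar R) (c : R) : 0 <= c ->
  @net_cvg I le (numFieldTopology.Real_sort__canonical__topology_structure_Topological R) r 0 -> (forall i, (0 <= f i)%E /\ (f i <= (c * r i)%:E)%E) ->
  net_cvg le f 0%:E.
Proof.
move=> c0 hr hf U hU.
have : ereal_nbhs 0%:E U := hU. rewrite /ereal_nbhs /=.
move=> /nbhs_ballP [eps eps0 hb].
have d0 : 0 < eps / (c + 1) by apply: divr_gt0 => //; rewrite ltr_wpDl.
have [i0 hi0] : exists i0, forall i, le i0 i -> ball (0:R^o) (eps / (c + 1)) (r i).
  by apply: hr; exact: (nbhsx_ballx (0:R^o) _ d0).
exists i0 => i /hi0; rewrite -ball_normE /= sub0r normrN => hri.
have [f0 fc] := hf i.
have ffin : f i = (fine (f i))%:E.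
  rewrite fineK // ge0_fin_numE //; exact: le_lt_trans fc (ltry _).
rewrite ffin; apply: hb; rewrite /ball_ /= sub0r normrN.
have t0 : 0 <= fine (f i) by rewrite -lee_fin -ffin.
rewrite ger0_norm //.
have : fine (f i) <= c * r i by rewrite -lee_fin -ffin.
move=> h; apply: (le_lt_trans h).
apply: (le_lt_trans (ler_wpM2l c0 (ler_norm (r i)))).
have : c * `|r i| <= c * (eps / (c + 1)) by apply: ler_wpM2l => //; exact: ltW.
move=> h2; apply: (le_lt_trans h2).
by rewrite mulrA ltr_pdivrMr ?ltr_wpDl // mulrDr mulr1 mulrC ltrDl.
Qed.

Lemma net_unique (R : realType) (I : Type) (le : I -> I -> Prop) (f : I -> \bar R) l1 l2 :
  directed_poset le -> net_cvg le f l1 -> net_cvg le f l2 -> l1 = l2.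
Proof.
move=> [_ tr _ dir] h1 h2; apply: ereal_hausdorff => U W hU hW.
have [i0 hi0] := h1 _ hU; have [i1 hi1] := h2 _ hW.
have [k [k0 k1]] := dir i0 i1.
by exists (f k); split; [exact: hi0 | exact: hi1].
Qed.

Section Vex.
Variables (G : topologicalType) (mul : G -> G -> G) (inv : G -> G) (e : G).
Hypothesis HG : lc_group mul inv e.

Lemma V_exists B : nbhs e B -> exists V, [/\ open V, V e &
  forall v1 v2, V v1 -> V v2 -> B (mul (inv v1) v2)].
Proof.
move=> nB.
have h : (fun p : G * G => mul p.1 p.2) @ (e, e) --> mul e e := @mul_cont _ _ _ _ HG (e, e).
rewrite (g1l HG) in h.
case: (h _ nB) => -[U1 U2] [/= nU1 nU2] sub.
have hi : inv @ e --> inv e := @inv_cont _ _ _ _ HG e.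
rewrite (ginv_e HG) in hi.
have nW : nbhs e (inv @^-1` U1) := hi _ nU1.
have nV0 : nbhs e ((inv @^-1` U1) `&` U2) := filterI nW nU2.
exists (interior ((inv @^-1` U1) `&` U2)); split.
- exact: open_interior.
- exact: nV0.
- move=> v1 v2 /interior_subset [h1 _] /interior_subset [_ h2].
  exact: (sub (inv v1, v2)).
Qed.
End Vex.

Section Main.
Variables (R : realType) (G : topologicalType) (mul : G -> G -> G) (inv : G -> G) (e : G).
Variables (m nu : set G -> \bar R).
Hypothesis HG : lc_group mul inv e.
Hypothesis Hm : haar_measure mul m.
Hypothesis Hu : unimodular mul m.
Hypothesis Hnu : borel_measure nu.
Variables (B : set G) (Cn : R).
Hypotheses (cB : compact B) (sB : setinv inv B = B) (nB : nbhs e B).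
Hypotheses (hCn : forall x, (nu (rmul mul B x) <= Cn%:E)%E) (Cn0 : 0 <= Cn).
Variable V : set G.
Hypotheses (oV : open V) (Ve : V e) (hV : forall v1 v2, V v1 -> V v2 -> B (mul (inv v1) v2)).

Let hG := G_hausdorff HG.
Let Hmb : borel_measure m. Proof. by case: Hm => -[]. Qed.
Let m_cpt C : compact C -> (m C < +oo)%E. Proof. by case: Hm => _ H _ _ _; exact: H. Qed.
Let m_open U : open U -> U !=set0 -> (0 < m U)%E. Proof. by case: Hm => _ _ H _ _; exact: H. Qed.

Lemma VB : V `<=` B.
Proof. by move=> v Vv; have := hV Ve Vv; rewrite (ginv_e HG) (g1l HG). Qed.

Lemma mV_fin : m V = (fine (m V))%:E.
Proof.
have h1 : (m V <= m B)%E.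
  exact: (bm_mono Hmb (borel_open oV) (borel_compact hG cB) VB).
have h0 : (0 <= m V)%E by exact: (bm_ge0 Hmb (borel_open oV)).
rewrite fineK // ge0_fin_numE //; exact: le_lt_trans h1 (m_cpt cB).
Qed.

Lemma mV_gt0 : 0 < fine (m V).
Proof.
by have := m_open oV (ex_intro _ e Ve); rewrite mV_fin lte_fin.
Qed.


Lemma rmul_DD M A s : rmul mul (DD mul M A) s = DD mul M (rmul mul A s).
Proof.
apply/seteqP; split.
- move=> z [d [[m1 [a [Mm1 Aa ->]]] [m2 [b [Mm2 Ab db]]]] <-]; split.
  + by exists m1, (mul a s); split => //; [exists a | rewrite (gA HG)].
  + exists m2, (mul b s); split => //; last by rewrite db (gA HG).
    by move=> [a' Aa' /(f_equal (fun t => mul t (inv s)))]; rewrite !(gKr HG) => ab; apply: Ab; rewrite -ab.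
- move=> z [[m1 [a' [Mm1 [a Aa <-] ->]]] [m2 [c [Mm2 Ac zc]]]].
  exists (mul m1 a); last by rewrite (gA HG).
  split; first by exists m1, a.
  exists m2, (mul c (inv s)); split => //.
  + by move=> Acs; apply: Ac; exists (mul c (inv s)) => //; rewrite (gKVr HG).
  + by rewrite [RHS](gA HG) -zc (gA HG) (gKr HG).
Qed.

Lemma borel_DD M A : compact M -> compact A -> borel (DD mul M A).
Proof.
move=> cM cA; apply: borelI.
- by apply: (borel_compact hG); exact: (compact_setmul HG).
- apply: borel_open; apply: (open_setmul HG); apply: closed_openC.
  exact: compact_closed.
Qed.


Lemma count_bound (X Y : set G) : borel Y -> m Y = (fine (m Y))%:E ->
  (forall x y, X x -> V y -> Y (mul y x)) ->
  exists xs, (X `<=` ufold (rmul mul B) xs) /\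
    (size xs)%:R * fine (m V) <= fine (m Y).
Proof.
move=> bY mY hY.
set mv := fine (m V).
have mv0 : 0 < mv := mV_gt0.
have bVx : forall x, borel (rmul mul V x).
  by move=> x; apply: borel_open; exact: (open_rmul HG x oV).
have mVx : forall x, m (rmul mul V x) = mv%:E.
  by move=> x; rewrite Hu -?mV_fin //; exact: borel_open.
have bnd : forall xs, sepP (rmul mul V) xs -> (forall x, inP x xs -> X x) ->
    (size xs)%:R * mv <= fine (m Y).
  move=> xs sp hx.
  have h := bm_ufold_eq Hmb bVx mVx sp.
  have sub : ufold (rmul mul V) xs `<=` Y.
    move=> y /ufoldP [x [ix [v Vv <-]]]; exact: hY (hx _ ix) Vv.
  have := bm_mono Hmb (borel_ufold xs bVx) bY sub.
  by rewrite h mY lee_fin.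
have fY0 : 0 <= fine (m Y) by apply: fine_ge0; exact: (bm_ge0 Hmb bY).
pose P := fun n => `[< exists xs, [/\ size xs = n, sepP (rmul mul V) xs &
   (forall x, inP x xs -> X x)] >].
have exP : exists n, P n by exists 0%N; apply/asboolP; exists [::].
have ubP : forall i, P i -> (i <= Num.Def.archi_bound (fine (m Y) / mv))%N.
  move=> i /asboolP [xs [sz sp hx]].
  have := bnd xs sp hx; rewrite sz => h.
  have : i%:R < (Num.Def.archi_bound (fine (m Y) / mv))%:R :> R.
    apply: le_lt_trans (archi_boundP _); last exact: divr_ge0 (ltW mv0).
    by rewrite ler_pdivlMr.
  by rewrite ltr_nat => /ltnW.
case: (ex_maxnP exP ubP) => n /asboolP [xs [sz sp hx]] maxn.
exists xs; split; last exact: bnd.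
move=> x Xx; have [//|nx] := pselect (ufold (rmul mul B) xs x).
exfalso.
have sp' : sepP (rmul mul V) (x :: xs).
  split => //; apply/seteqP; split => // y [[v Vv <-] /ufoldP [x' [ix' [v' Vv' e']]]].
  apply: nx; apply/ufoldP; exists x'; split => //.
  exists (mul (inv v) v'); first exact: hV.
  by rewrite -(gA HG) e' (gKl HG).
have : P (size xs).+1.
  apply/asboolP; exists (x :: xs); split => // y /= [<-|iy]; [exact: Xx | exact: hx].
by move/maxn; rewrite sz ltnn.
Qed.


Lemma est (L M0 A D : set G) s : compact L -> compact M0 -> compact A ->
  D `<=` DD mul M0 A ->
  (outer nu (rmul mul (setmul mul L D) s) <=
   (Cn / fine (m V) * fine (m (DD mul (setmul mul B (setmul mul L M0)) A)))%:E)%E.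
Proof.
move=> cL cM0 cA sD.
set M := setmul mul B (setmul mul L M0).
have cM : compact M := compact_setmul HG cB (compact_setmul HG cL cM0).
set Y := DD mul M (rmul mul A s).
have bY : borel Y := borel_DD cM (@compact_rmul _ _ _ _ HG A s cA).
have bDD : borel (DD mul M A) := borel_DD cM cA.
have mY : m Y = m (DD mul M A) by rewrite /Y -rmul_DD Hu.
have finDD : m (DD mul M A) = (fine (m (DD mul M A)))%:E.
  have h0 := bm_ge0 Hmb bDD.
  have cMA : compact (setmul mul M A) := compact_setmul HG cM cA.
  have h1 : (m (DD mul M A) <= m (setmul mul M A))%E.
    by apply: (bm_mono Hmb bDD (borel_compact hG cMA)) => x [].
  rewrite fineK // ge0_fin_numE //; exact: le_lt_trans h1 (m_cpt cMA).
have hY : forall x y, rmul mul (setmul mul L D) s x -> V y -> Y (mul y x).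
  move=> _ y [_ [l [d [Ll Dd ->]]] <-] Vy; rewrite /Y -rmul_DD /rmul.
  exists (mul y (mul l d)); last by rewrite -!(gA HG).
  have [[m1 [a [Mm1 Aa dE]]] [m2 [b [Mm2 Ab dE']]]] := sD d Dd.
  split.
  - exists (mul y (mul l m1)), a; split => //; last by rewrite dE !(gA HG).
    by exists y, (mul l m1); split => //; [exact: VB | exists l, m1].
  - exists (mul y (mul l m2)), b; split => //; last by rewrite dE' !(gA HG).
    by exists y, (mul l m2); split => //; [exact: VB | exists l, m2].
have mYf : m Y = (fine (m Y))%:E by rewrite mY -finDD.
have [xs [cov bnd]] := count_bound bY mYf hY.
have bB : forall x, borel (rmul mul B x).
  by move=> x; apply: (borel_compact hG); exact: (@compact_rmul _ _ _ _ HG B x cB).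
have h1 : (outer nu (rmul mul (setmul mul L D) s) <= nu (ufold (rmul mul B) xs))%E.
  apply: ereal_inf_lbound; exists (ufold (rmul mul B) xs) => //; split => //.
  exact: borel_ufold.
have h2 := bm_ufold_le Hnu xs bB hCn.
apply: (le_trans h1); apply: (le_trans h2); rewrite lee_fin.
move: bnd; rewrite mY => bnd.
have mv0 := mV_gt0.
have h : (size xs)%:R <= fine (m (DD mul M A)) / fine (m V) by rewrite ler_pdivlMr.
rewrite mulrC -mulrA; apply: ler_wpM2l => //; by rewrite mulrC.
Qed.


Let outer_ge0 X : (0 <= outer nu X)%E.
Proof. by apply: le_ereal_inf_tmp => _ [B' [bB' _] <-]; exact: (bm_ge0 Hnu bB'). Qed.

Lemma sup_bound L M0 A D : compact L -> compact M0 -> compact A -> (0 < m A)%E ->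
  D `<=` DD mul M0 A ->
  (0 <= sup_ratio mul nu m L D A)%E /\ (sup_ratio mul nu m L D A <=
    (Cn / fine (m V) * (fine (m (DD mul (setmul mul B (setmul mul L M0)) A)) / fine (m A)))%:E)%E.
Proof.
move=> cL cM0 cA mA0 sD.
have fA : 0 < fine (m A) by apply: fine_gt0; rewrite mA0 m_cpt.
split.
- set x := (outer nu (rmul mul (setmul mul L D) e) * ((fine (m A))^-1)%:E)%E.
  have x0 : (0 <= x)%E by apply: mule_ge0 => //; rewrite lee_fin invr_ge0 ltW.
  apply: (le_trans x0); apply: ereal_sup_ubound; by exists e.
- apply: ge_ereal_sup => _ [s _ <-].
  have h := est s cL cM0 cA sD.
  have h2 := lee_wpmul2r (x := ((fine (m A))^-1)%:E) _ h.
  apply: (le_trans (h2 _)); first by rewrite lee_fin invr_ge0 ltW.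
  by rewrite -EFinM mulrA.
Qed.


Variables (I : Type) (le : I -> I -> Prop) (A : I -> set G).
Hypotheses (Hdir : directed_poset le) (Hfol : strong_folner mul inv m le A).

Lemma key (bd : set G -> set G -> set G) :
  (forall K A0, ncompact K ->
     bd K A0 `<=` DD mul (setmul mul (K `|` [set e] `|` setinv inv K) B) A0) ->
  forall K L, ncompact K -> ncompact L ->
  net_cvg le (fun i => sup_ratio mul nu m L (bd K (A i)) (A i)) 0%:E.
Proof.
move=> hbd K L [cK nK] [cL nL].
set M0 := setmul mul (K `|` [set e] `|` setinv inv K) B.
have cM0 : compact M0.
  apply: (compact_setmul HG) cB; apply: compactU; last exact: (compact_setinv HG).
  by apply: compactU => //; exact: compact_set1.
set M := setmul mul B (setmul mul L M0).
have cM : compact M := compact_setmul HG cB (compact_setmul HG cL cM0).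
have Be : B e := nbhs_singleton nB.
have nM : M !=set0.
  case: nL => l Ll; exists (mul e (mul l (mul e e))).
  exists e, (mul l (mul e e)); split => //.
  exists l, (mul e e); split => //.
  by exists e, e; split => //; left; right.
have ncM : ncompact (setinv inv M).
  split; first exact: (compact_setinv HG).
  by case: nM => x Mx; exists (inv x); exists x.
case: Hfol => HA HF.
have hr := HF _ ncM.
rewrite /bd_low (gsetinvK HG) in hr.
apply: (net_squeeze (divr_ge0 Cn0 (ltW mV_gt0)) hr) => i.
have [[cA _] mA0] := HA i.
exact: (sup_bound cL cM0 cA mA0 (hbd K (A i) (conj cK nK))).
Qed.

Lemma gen (bd : set G -> set G -> set G) :
  (forall K A0, ncompact K ->
     bd K A0 `<=` DD mul (setmul mul (K `|` [set e] `|` setinv inv K) B) A0) ->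
  limits_exist_sup0 mul nu m le A bd.
Proof.
move=> hbd; split.
- by move=> K L nK nL; exists 0%:E; exact: key.
- rewrite -[X in _ = X](ereal_sup1 0%E); congr ereal_sup.
  apply/seteqP; split => [l [K [L [nK nL hl]]]|_ ->].
  + exact: (net_unique Hdir hl (key hbd nK nL)).
  + have ne : ncompact [set e] by split; [exact: compact_set1 | exists e].
    by exists [set e], [set e]; split => //; exact: key.
Qed.

End Main.

Unset Implicit Arguments.
Set Strict Implicit.

Theorem lemma5p10 (R : realType) (G : topologicalType)
    (mul : G -> G -> G) (inv : G -> G) (e : G)
    (m : set G -> \bar R) (I : Type) (le : I -> I -> Prop)
    (A : I -> set G) (nu : set G -> \bar R) :
  lc_group mul inv e ->
  haar_measure mul m ->
  unimodular mul m ->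
  amenable mul m ->
  directed_poset le ->
  strong_folner mul inv m le A ->
  borel_measure nu ->
  upper_translation_bounded mul inv e nu ->
  [/\ limits_exist_sup0 mul nu m le A (delta_up mul),
      limits_exist_sup0 mul nu m le A (bd_low mul inv) &
      limits_exist_sup0 mul nu m le A (bd_up mul inv)].
Proof.
move=> HG Hm Hu _ Hdir Hfol Hnu [B [cB sB nB hsup]].
set S := [set nu (rmul mul B x) | x in [set: G]].
have bB x : borel (rmul mul B x).
  by apply: (borel_compact (G_hausdorff HG)); exact: (@compact_rmul _ _ _ _ HG B x cB).
have S0 : (0 <= ereal_sup S)%E.
  apply: (le_trans (bm_ge0 Hnu (bB e))); apply: ereal_sup_ubound; by exists e.
have hCn : forall x, (nu (rmul mul B x) <= (fine (ereal_sup S))%:E)%E.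
  move=> x; rewrite fineK; first by apply: ereal_sup_ubound; exists x.
  by rewrite ge0_fin_numE.
have Cn0 : 0 <= fine (ereal_sup S) by exact: fine_ge0.
have [V [oV Ve hV]] := V_exists HG nB.
have G0 := gen HG Hm Hu Hnu cB nB hCn Cn0 oV Ve hV Hdir Hfol.
split; apply: G0 => K A0 [cK nK].
- exact: (incl_delta HG nB).
- exact: (incl_low HG nB).
- exact: (incl_up HG nB).
Qed.
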